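(* Let $(T,s)$ be a parking function on a rooted tree $T$ with vertex set $[n]$, and let $e=(u,v)$ be an edge of $T$ (oriented $u\to v$, towards the root). Then $e$ is used by $s$ if and only if $|T_u|<|\{i: s_i\in T_u\}|$. Furthermore, the set of edges used by $s$ is invariant under permutations of the entries of $s$.
   Context: $T$ is a rooted tree on vertex set $[n]$ with edges oriented towards the root; an edge $u\to v$ is written $(u,v)$. For $s\in[n]^n$, drivers $1,\dots,n$ arrive in order; driver $i$ parks at $s_i$ if unoccupied, otherwise follows the directed path towards the root and parks at the first unoccupied vertex, leaving if none exists. $(T,s)$ is a parking function if all drivers park. $T_u$ denotes the set of vertices $w$ having a directed path from $w$ to $u$ (including $u$). An edge $e$ is used by $s$ if some driver, after failing to park at her preferred vertex, crosses $e$ during her search for an unoccupied vertex. *)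

(* Defs.v *)
From mathcomp Require Import all_boot all_fingroup.
Set Implicit Arguments. Unset Strict Implicit. Unset Printing Implicit Defensive.

(* A rooted tree on vertex set [n] (encoded as 'I_n) with edges oriented
   towards the root r is given by its parent map par : every non-root
   vertex u has the unique out-edge (u, par u); the root is a fixed point
   and every vertex reaches the root by iterating par. *)
Definition is_rooted_tree n (par : 'I_n -> 'I_n) (r : 'I_n) : Prop :=
  par r = r /\ forall v : 'I_n, exists k, iter k par v = r.

Definition is_edge n (par : 'I_n -> 'I_n) (r u v : 'I_n) : bool :=
  (u != r) && (par u == v).

(* The directed path from p towards the root (n vertices long, which
   covers the whole path to r; after reaching r it stays at r). *)
Definition path_to_root n (par : 'I_n -> 'I_n) (p : 'I_n) : seq 'I_n :=
  traject par p n.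

Definition subtree n (par : 'I_n -> 'I_n) (u : 'I_n) : {set 'I_n} :=
  [set w | u \in path_to_root par w].

(* State of the parking process: (all drivers so far parked?,
   occupied vertices, edges crossed so far). *)
Definition pstate n := (bool * {set 'I_n} * {set 'I_n * 'I_n})%type.

(* She walks along the path
   from p towards the root and parks at the first unoccupied vertex; she
   crosses every edge (u, par u) with u strictly before her spot (if no
   unoccupied vertex exists she crosses all edges to the root and leaves). *)
Definition park_step n (par : 'I_n -> 'I_n) (r : 'I_n)
    (st : pstate n) (p : 'I_n) : pstate n :=
  let: (ok, occ, used) := st in
  let pth := path_to_root par p in
  let k := find (fun v => v \notin occ) pth in
  let crossed := [set (u, par u) | u in [seq u <- take k pth | u != r]] in
  if k < n then (ok, nth p pth k |: occ, used :|: crossed)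
  else (false, occ, used :|: crossed).

(* Run drivers 1..n (encoded 0..n-1) in order with preferences s. *)
Definition run_parking n (par : 'I_n -> 'I_n) (r : 'I_n) (s : 'I_n -> 'I_n)
    : pstate n :=
  foldl (park_step par r) (true, set0, set0) [seq s i | i <- enum 'I_n].

Definition parking_function n (par : 'I_n -> 'I_n) (r : 'I_n)
    (s : 'I_n -> 'I_n) : Prop :=
  (run_parking par r s).1.1 = true.

Definition used_edges n (par : 'I_n -> 'I_n) (r : 'I_n) (s : 'I_n -> 'I_n)
    : {set 'I_n * 'I_n} :=
  (run_parking par r s).2.

(* Main.v *)
Require Import Defs.
From mathcomp Require Import all_boot all_fingroup.
From mathcomp Require Import zify.
Set Implicit Arguments. Unset Strict Implicit. Unset Printing Implicit Defensive.

Lemma iter_in_path n (par : 'I_n -> 'I_n) p j :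
  iter j par p \in path_to_root par p.
Proof.
have Hc : fconnect par p (iter j par p) by apply: fconnect_iter.
rewrite fconnect_orbit /fingraph.orbit in Hc.
have Ho : fingraph.order par p <= n by rewrite /fingraph.order; apply: leq_trans (max_card _) _; rewrite card_ord.
rewrite /path_to_root.
have -> : traject par p n = traject par p (fingraph.order par p + (n - fingraph.order par p)) by rewrite subnKC.
by rewrite trajectD mem_cat Hc.
Qed.

Lemma in_pathP n (par : 'I_n -> 'I_n) p x :
  reflect (exists j, x = iter j par p) (x \in path_to_root par p).
Proof.
apply: (iffP idP) => [/trajectP [i _ ->]|[j ->]]; [by exists i | exact: iter_in_path].
Qed.

Lemma path_trans n (par : 'I_n -> 'I_n) p x y :
  x \in path_to_root par p -> y \in path_to_root par x -> y \in path_to_root par p.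
Proof. move=> /in_pathP [i ->] /in_pathP [j ->]; rewrite -iterD; exact: iter_in_path. Qed.

Definition dclosed n (par : 'I_n -> 'I_n) (A : {set 'I_n}) :=
  forall x y, x \in A -> x \in path_to_root par y -> y \in A.

Lemma subtree_dclosed n (par : 'I_n -> 'I_n) u : dclosed par (subtree par u).
Proof. move=> x y; rewrite !inE => Hx Hy; exact: path_trans Hy Hx. Qed.

Lemma no_return n (par : 'I_n -> 'I_n) r (u : 'I_n) m :
  is_rooted_tree par r -> u != r -> 0 < m ->
  u \notin path_to_root par (iter m par u).
Proof.
move=> [Hr Hreach] Hu Hm; apply/negP => /in_pathP [j Hj].
rewrite -iterD in Hj.
have Hq : 0 < j + m by rewrite addn_gt0 Hm orbT.
have Ht : forall t, iter (t * (j + m)) par u = u.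
  by elim=> [|t IH] //=; rewrite mulSn iterD IH -Hj.
have Hrr : forall l, iter l par r = r by elim=> //= l ->.
case: (Hreach u) => K HK.
have HKq : K <= K * (j + m) by rewrite leq_pmulr.
have : iter (K * (j + m)) par u = r by rewrite -(subnK HKq) iterD HK Hrr.
by rewrite Ht => /eqP; rewrite (negbTE Hu).
Qed.

Lemma after_spot n (par : 'I_n -> 'I_n) p x k :
  x \in path_to_root par p -> k <= index x (path_to_root par p) ->
  k < n /\ x \in path_to_root par (iter k par p).
Proof.
move=> Hx Hk.
have Hi : index x (path_to_root par p) < n.
  by have := Hx; rewrite -index_mem /path_to_root size_traject.
split; first exact: leq_ltn_trans Hk Hi.
have : nth p (path_to_root par p) (index x (path_to_root par p)) = x by rewrite nth_index.
rewrite /path_to_root nth_traject // => <-.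
by rewrite -(subnK Hk) iterD iter_in_path.
Qed.

Lemma park_stepE n (par : 'I_n -> 'I_n) r (st : pstate n) p :
  park_step par r st p =
  let pth := path_to_root par p in
  let k := find (fun v => v \notin st.1.2) pth in
  let crossed := [set (u, par u) | u in [seq u <- take k pth | u != r]] in
  if k < n then (st.1.1, iter k par p |: st.1.2, st.2 :|: crossed)
  else (false, st.1.2, st.2 :|: crossed).
Proof.
case: st => [[ok occ] used] /=; case: ifP => // Hk.
by rewrite /path_to_root nth_traject.
Qed.

Lemma mem_crossed n (par : 'I_n -> 'I_n) r (s : seq 'I_n) a b :
  (a, b) \in [set (u, par u) | u in [seq u <- s | u != r]] ->
  [/\ a \in s, a != r & b = par a].
Proof.
by case/imsetP => x; rewrite mem_filter => /andP [Hx Hs] [-> ->].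
Qed.

Lemma mem_crossed2 n (par : 'I_n -> 'I_n) r (s : seq 'I_n) a :
  a \in s -> a != r -> (a, par a) \in [set (u, par u) | u in [seq u <- s | u != r]].
Proof. by move=> Hs Ha; apply: imset_f; rewrite mem_filter Ha. Qed.

Lemma spot_fresh n (par : 'I_n -> 'I_n) (occ : {set 'I_n}) p :
  find (fun v => v \notin occ) (path_to_root par p) < n ->
  iter (find (fun v => v \notin occ) (path_to_root par p)) par p \notin occ.
Proof.
move=> Hk.
have Hh : has (fun v => v \notin occ) (path_to_root par p)
  by rewrite has_find /path_to_root size_traject.
have := nth_find p Hh.
by rewrite /path_to_root nth_traject.
Qed.

Lemma cardIU1 (T : finType) (x : T) (O A : {set T}) :
  #|(x |: O) :&: A| = #|O :&: A| + ((x \in A) && (x \notin O)).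
Proof.
rewrite setIUl; case: (boolP (x \in A)) => Hx /=.
  have -> : [set x] :&: A = [set x] by apply/setIidPl; rewrite sub1set.
  by rewrite cardsU1 inE Hx andbT addnC.
have -> : [set x] :&: A = set0.
  by apply/setP => y; rewrite !inE; case: eqP => // ->; rewrite (negbTE Hx).
by rewrite set0U addn0.
Qed.

Lemma step_occ n (par : 'I_n -> 'I_n) r (st : pstate n) (p : 'I_n) :
  st.1.2 \subset (park_step par r st p).1.2.
Proof. by rewrite park_stepE /=; case: ifP => _ //=; apply: subsetUr. Qed.

Lemma step_used n (par : 'I_n -> 'I_n) r (st : pstate n) (p : 'I_n) :
  st.2 \subset (park_step par r st p).2.
Proof. by rewrite park_stepE /=; case: ifP => _ //=; apply: subsetUl. Qed.

Lemma step_ok n (par : 'I_n -> 'I_n) r (st : pstate n) (p : 'I_n) :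
  (park_step par r st p).1.1 -> st.1.1.
Proof. by rewrite park_stepE /=; case: ifP. Qed.

Lemma step_edges n (par : 'I_n -> 'I_n) r (st : pstate n) (p : 'I_n) :
  st.2 \subset [set e | (e.1 != r) && (e.2 == par e.1)] ->
  (park_step par r st p).2 \subset [set e | (e.1 != r) && (e.2 == par e.1)].
Proof.
move=> H; rewrite park_stepE /=.
have Hc : forall s : seq 'I_n, [set (u, par u) | u in [seq u <- s | u != r]]
   \subset [set e | (e.1 != r) && (e.2 == par e.1)].
  move=> s; apply/subsetP => [[a b]] /mem_crossed [_ Ha ->]; by rewrite inE /= Ha eqxx.
by case: ifP => _ /=; rewrite subUset H Hc.
Qed.

Lemma step_size n (par : 'I_n -> 'I_n) r (st : pstate n) (p : 'I_n) :
  #|(park_step par r st p).1.2| + ~~ (park_step par r st p).1.1 <=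
  #|st.1.2| + ~~ st.1.1 + 1.
Proof.
rewrite park_stepE /=; case: ifP => Hk /=.
  by rewrite cardsU1 (spot_fresh Hk) /=; case: (~~ st.1.1) => /=; lia.
by case: (st.1.1) => /=; lia.
Qed.

Lemma step_full n (par : 'I_n -> 'I_n) r (st : pstate n) (p : 'I_n) :
  (park_step par r st p).1.1 ->
  #|(park_step par r st p).1.2| = #|st.1.2| + 1.
Proof.
rewrite park_stepE /=; case: ifP => Hk //= _.
by rewrite cardsU1 (spot_fresh Hk) add1n addn1.
Qed.

Lemma step_I1 n (par : 'I_n -> 'I_n) r (st : pstate n) (p : 'I_n) (A : {set 'I_n}) :
  dclosed par A ->
  #|(park_step par r st p).1.2 :&: A| <= #|st.1.2 :&: A| + (p \in A).
Proof.
move=> HA; rewrite park_stepE /=.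
set k := find _ _.
case: ifP => Hk /=; last by rewrite leq_addr.
rewrite cardIU1 leq_add2l.
case: (boolP (iter k par p \in A)) => //= Hs.
by rewrite (HA _ _ Hs (iter_in_path _ _ _)); case: (_ \notin _).
Qed.

Lemma step_I2 n (par : 'I_n -> 'I_n) r (st : pstate n) (p : 'I_n) u :
  is_rooted_tree par r -> u != r ->
  #|(park_step par r st p).1.2 :&: subtree par u| + ((u, par u) \in (park_step par r st p).2)
  <= #|st.1.2 :&: subtree par u| + ((u, par u) \in st.2) + (p \in subtree par u).
Proof.
move=> Htree Hu.
have HA := @subtree_dclosed n par u.
rewrite park_stepE /=.
set pth := path_to_root par p.
set k := find _ _.
set crossed := [set _ | _ in _].
have Hcr : (u, par u) \in crossed -> p \in subtree par u /\
     (k < n -> iter k par p \in subtree par u = false).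
  move=> /mem_crossed [Hin _ _]; have Hi := index_ltn Hin.
  have Hup : u \in pth by apply: (mem_take Hin).
  split; first by rewrite inE.
  move=> Hk.
  apply/negbTE; rewrite inE.
  have : nth p pth (index u pth) = u by rewrite nth_index.
  rewrite /pth /path_to_root nth_traject; last exact: ltn_trans Hk.
  move=> Heq.
  rewrite -(subnK (ltnW Hi)) iterD Heq -/(path_to_root par _).
  apply: no_return Htree Hu _; by rewrite subn_gt0.
case: ifP => Hk /=.
  rewrite cardIU1 in_setU.
  have Ha : iter k par p \in subtree par u -> p \in subtree par u.
    by move=> Hs; apply: (HA _ _ Hs (iter_in_path _ _ _)).
  have F1 : ((u, par u) \in crossed) ==> (p \in subtree par u).
    by apply/implyP => /Hcr [].
  have F2 : ((u, par u) \in crossed) ==> ~~ (iter k par p \in subtree par u).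
    by apply/implyP => /Hcr [_ /(_ Hk) ->].
  have F3 : (iter k par p \in subtree par u) ==> (p \in subtree par u) by apply/implyP.
  move: F1 F2 F3.
  case: (iter k par p \in subtree par u); case: (p \in subtree par u);
  case: ((u, par u) \in st.2); case: ((u, par u) \in crossed);
  case: (iter k par p \notin st.1.2) => /= F1 F2 F3;
  solve [lia | discriminate F1 | discriminate F2 | discriminate F3].
rewrite in_setU.
have F1 : ((u, par u) \in crossed) ==> (p \in subtree par u).
  by apply/implyP => /Hcr [].
move: F1; case: (p \in subtree par u);
  case: ((u, par u) \in st.2); case: ((u, par u) \in crossed) => /= F1;
  solve [lia | discriminate F1].
Qed.

Lemma step_I3 n (par : 'I_n -> 'I_n) r (st : pstate n) (p : 'I_n) u :
  u != r -> (u, par u) \notin (park_step par r st p).2 ->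
  #|st.1.2 :&: subtree par u| + (p \in subtree par u) <=
  #|(park_step par r st p).1.2 :&: subtree par u|.
Proof.
move=> Hu.
rewrite park_stepE /=.
set pth := path_to_root par p.
set k := find _ _.
set crossed := [set _ | _ in _].
have Hge : forall b, (u, par u) \notin (if k < n then (b, iter k par p |: st.1.2, st.2 :|: crossed)
                      else (false, st.1.2, st.2 :|: crossed)).2 ->
     p \in subtree par u -> k < n /\ u \in path_to_root par (iter k par p).
  move=> b Hn Hp.
  have Hc : (u, par u) \notin crossed by apply: contra Hn; case: ifP => _ /=; rewrite in_setU => ->; rewrite orbT.
  have Hup : u \in pth by move: Hp; rewrite inE.
  apply: after_spot => //.
  rewrite leqNgt -(in_take _ Hup); apply: contra Hc => Hin.
  exact: mem_crossed2.
move=> Hn; have := Hge st.1.1 Hn.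
case: (boolP (p \in subtree par u)) => Hp.
  move=> /(_ erefl) [Hk Hs].
  rewrite Hk /= cardIU1 (spot_fresh Hk) inE Hs /=; lia.
move=> _; case: ifP => Hk /=; last by rewrite addn0.
by rewrite cardIU1 addn0 leq_addr.
Qed.

Lemma step_I4 n (par : 'I_n -> 'I_n) r (st : pstate n) (p : 'I_n) (Z D : {set 'I_n}) :
  (forall x, (x \in D) = [exists z in Z, z \in path_to_root par x]) ->
  (forall z, z \in Z -> z \notin (park_step par r st p).1.2) ->
  #|st.1.2 :&: D| + (p \in D) <= #|(park_step par r st p).1.2 :&: D|.
Proof.
move=> HD HZ.
have HZ0 : forall z, z \in Z -> z \notin st.1.2.
  move=> z Hz; apply: contra (HZ z Hz); exact: (subsetP (@step_occ n par r st p)).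
rewrite park_stepE /=.
set pth := path_to_root par p.
set k := find _ _.
case: (boolP (p \in D)) => Hp.
  move: (Hp); rewrite HD => /exists_inP [z Hz Hzp].
  have Hkz : k <= index z pth.
    rewrite leqNgt; apply/negP => Hlt.
    have := before_find p Hlt; rewrite nth_index //= => Hzo.
    by move: (HZ0 z Hz); rewrite Hzo.
  have [Hk Hs] := after_spot Hzp Hkz.
  have HsD : iter k par p \in D by rewrite HD; apply/exists_inP; exists z.
  rewrite Hk /= cardIU1 (spot_fresh Hk) HsD /=; lia.
case: ifP => Hk /=; last by rewrite addn0.
by rewrite cardIU1 addn0 leq_addr.
Qed.

Lemma count_run n (s : 'I_n -> 'I_n) (A : {set 'I_n}) :
  count (fun x => x \in A) [seq s i | i <- enum 'I_n] = #|[set i | s i \in A]|.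
Proof. rewrite count_map enumT cardsE cardE -size_filter /enum_mem.
congr size; apply: eq_filter => x; by rewrite /= !inE.
Qed.

Lemma chain1 a b c x : a <= b + x -> b <= c + 1 -> a <= c + x.+1.
Proof. lia. Qed.
Lemma chain2 a b c x y : a <= b + x -> b <= c + y -> a <= c + (y + x).
Proof. lia. Qed.
Lemma chain3 a b c x y : a + y <= b -> b + x <= c -> a + (y + x) <= c.
Proof. lia. Qed.

Lemma fold_used n (par : 'I_n -> 'I_n) r L (st : pstate n) :
  st.2 \subset (foldl (park_step par r) st L).2.
Proof.
elim: L st => [|p L IH] st /=; first exact: subxx.
exact: subset_trans (step_used par r st p) (IH _).
Qed.

Lemma fold_occ n (par : 'I_n -> 'I_n) r L (st : pstate n) :
  st.1.2 \subset (foldl (park_step par r) st L).1.2.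
Proof.
elim: L st => [|p L IH] st /=; first exact: subxx.
exact: subset_trans (step_occ par r st p) (IH _).
Qed.

Lemma fold_ok n (par : 'I_n -> 'I_n) r L (st : pstate n) :
  (foldl (park_step par r) st L).1.1 -> st.1.1.
Proof. elim: L st => [|p L IH] st //= /IH; exact: step_ok. Qed.

Lemma fold_edges n (par : 'I_n -> 'I_n) r L (st : pstate n) :
  st.2 \subset [set e | (e.1 != r) && (e.2 == par e.1)] ->
  (foldl (park_step par r) st L).2 \subset [set e | (e.1 != r) && (e.2 == par e.1)].
Proof. elim: L st => [|p L IH] st //= H; apply: IH; exact: step_edges. Qed.

Lemma fold_size n (par : 'I_n -> 'I_n) r L (st : pstate n) :
  #|(foldl (park_step par r) st L).1.2| + ~~ (foldl (park_step par r) st L).1.1 <=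
  #|st.1.2| + ~~ st.1.1 + size L.
Proof.
elim: L st => [|p L IH] st /=; first by rewrite addn0.
exact: chain1 (IH (park_step par r st p)) (step_size par r st p).
Qed.

Lemma fold_full n (par : 'I_n -> 'I_n) r L (st : pstate n) :
  (foldl (park_step par r) st L).1.1 ->
  #|(foldl (park_step par r) st L).1.2| = #|st.1.2| + size L.
Proof.
elim: L st => [|p L IH] st /=; first by rewrite addn0.
move=> H; rewrite (IH _ H) (step_full (fold_ok H)); by rewrite addn1 addSn addnS.
Qed.

Lemma fold_I1 n (par : 'I_n -> 'I_n) r L (st : pstate n) (A : {set 'I_n}) :
  dclosed par A ->
  #|(foldl (park_step par r) st L).1.2 :&: A| <= #|st.1.2 :&: A| + count (fun x => x \in A) L.
Proof.
move=> HA; elim: L st => [|p L IH] st /=; first by rewrite addn0.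
exact: chain2 (IH (park_step par r st p)) (step_I1 r st p HA).
Qed.

Lemma fold_I2 n (par : 'I_n -> 'I_n) r L (st : pstate n) u :
  is_rooted_tree par r -> u != r ->
  #|(foldl (park_step par r) st L).1.2 :&: subtree par u| +
    ((u, par u) \in (foldl (park_step par r) st L).2)
  <= #|st.1.2 :&: subtree par u| + ((u, par u) \in st.2) +
     count (fun x => x \in subtree par u) L.
Proof.
move=> Ht Hu; elim: L st => [|p L IH] st /=; first by rewrite addn0.
exact: chain2 (IH (park_step par r st p)) (step_I2 st p Ht Hu).
Qed.

Lemma fold_I3 n (par : 'I_n -> 'I_n) r L (st : pstate n) u :
  u != r -> (u, par u) \notin (foldl (park_step par r) st L).2 ->
  #|st.1.2 :&: subtree par u| + count (fun x => x \in subtree par u) L <=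
  #|(foldl (park_step par r) st L).1.2 :&: subtree par u|.
Proof.
move=> Hu; elim: L st => [|p L IH] st /=; first by rewrite addn0.
move=> Hn.
have Hn1 : (u, par u) \notin (park_step par r st p).2.
  by apply: contra Hn; apply: (subsetP (fold_used _ _ _ _)).
have H1 := @step_I3 n par r st p u Hu Hn1. have H2 := IH _ Hn. exact: chain3 H1 H2.
Qed.

Lemma fold_I4 n (par : 'I_n -> 'I_n) r L (st : pstate n) (Z D : {set 'I_n}) :
  (forall x, (x \in D) = [exists z in Z, z \in path_to_root par x]) ->
  (forall z, z \in Z -> z \notin (foldl (park_step par r) st L).1.2) ->
  #|st.1.2 :&: D| + count (fun x => x \in D) L <=
  #|(foldl (park_step par r) st L).1.2 :&: D|.
Proof.
move=> HD; elim: L st => [|p L IH] st /=; first by rewrite addn0.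
move=> HZ.
have HZ1 : forall z, z \in Z -> z \notin (park_step par r st p).1.2.
  move=> z Hz; apply: contra (HZ z Hz); apply: (subsetP (fold_occ _ _ _ _)).
have H1 := @step_I4 n par r st p Z D HD HZ1.
have H2 := IH _ HZ.
exact: chain3 H1 H2.
Qed.

Definition runL n (s : 'I_n -> 'I_n) := [seq s i | i <- enum 'I_n].

Lemma size_runL n (s : 'I_n -> 'I_n) : size (runL s) = n.
Proof. by rewrite size_map size_enum_ord. Qed.

Lemma run_full n (par : 'I_n -> 'I_n) r s :
  parking_function par r s -> (run_parking par r s).1.2 = setT.
Proof.
rewrite /parking_function /run_parking => H.
have := fold_full H; rewrite cards0 add0n size_map size_enum_ord => Hc.
apply/eqP; rewrite eqEcard subsetT /= cardsT card_ord. exact: (eq_leq (esym Hc)).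
Qed.

Lemma used_iff n (par : 'I_n -> 'I_n) r s u :
  is_rooted_tree par r -> parking_function par r s -> u != r ->
  ((u, par u) \in used_edges par r s <->
      #|subtree par u| < #|[set i : 'I_n | s i \in subtree par u]|).
Proof.
move=> Ht Hp Hu.
have Hf := run_full Hp.
rewrite -count_run.
split.
  move=> Hin.
  have := @fold_I2 n par r [seq s i | i <- enum 'I_n] (true, set0, set0) u Ht Hu.
  rewrite /used_edges /run_parking in Hin Hf.
  by rewrite Hin Hf setTI /= set0I cards0 in_set0 addn1.
move=> Hlt; apply/negPn/negP => Hn.
have := @fold_I3 n par r [seq s i | i <- enum 'I_n] (true, set0, set0) u Hu Hn.
rewrite /run_parking in Hf.
rewrite Hf setTI /= set0I cards0 add0n => Hle.
by move: (leq_ltn_trans Hle Hlt); rewrite ltnn.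
Qed.

Lemma count_perm n (s : 'I_n -> 'I_n) (sigma : 'S_n) (A : {set 'I_n}) :
  #|[set i | s (sigma i) \in A]| = #|[set i | s i \in A]|.
Proof.
rewrite -[RHS](card_preimset _ (@perm_inj _ sigma)); apply: eq_card => i; by rewrite !inE.
Qed.

Lemma parking_perm n (par : 'I_n -> 'I_n) r s (sigma : 'S_n) :
  parking_function par r s -> parking_function par r (fun i => s (sigma i)).
Proof.
move=> Hp.
have Hf := run_full Hp.
rewrite /parking_function.
case E: (run_parking par r (fun i => s (sigma i))).1.1 => //.
exfalso.
set occ' := (run_parking par r (fun i => s (sigma i))).1.2.
have Hsz := @fold_size n par r [seq s (sigma i) | i <- enum 'I_n] (true, set0, set0).
rewrite -/(run_parking par r (fun i => s (sigma i))) E cards0 /= size_map size_enum_ord in Hsz.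
have : ~~ ([set: 'I_n] \subset occ').
  apply/negP => Hs.
  have := subset_leq_card Hs; rewrite cardsT card_ord => Hle.
  move: Hsz; rewrite -/occ' addn1 => Hsz.
  by move: (leq_ltn_trans Hle Hsz); rewrite ltnn.
case/subsetPn => z0 _ Hz0.
pose D := [set x | [exists z in ~: occ', z \in path_to_root par x]].
have HD : forall x, (x \in D) = [exists z in ~: occ', z \in path_to_root par x].
  by move=> x; rewrite inE.
have HdD : dclosed par D.
  move=> x y; rewrite !HD => /exists_inP [z Hz Hzx] Hxy.
  by apply/exists_inP; exists z => //; apply: path_trans Hxy Hzx.
have H4 := @fold_I4 n par r [seq s (sigma i) | i <- enum 'I_n] (true, set0, set0) (~: occ') D HD.
rewrite set0I cards0 add0n in H4.
have H4' : forall z, z \in ~: occ' -> z \notin occ' by move=> z; rewrite inE.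
move: H4' => /H4 H4'.
have H1 := @fold_I1 n par r [seq s i | i <- enum 'I_n] (true, set0, set0) D HdD.
rewrite set0I cards0 add0n in H1.
rewrite /run_parking in Hf; rewrite Hf setTI in H1.
rewrite !count_run count_perm in H4'.
rewrite count_run in H1.
have Hlt : #|occ' :&: D| < #|D|.
  apply: proper_card; apply/properP; split; first exact: subsetIr.
  exists z0.
    rewrite HD; apply/exists_inP; exists z0; first by rewrite inE.
    exact: (@iter_in_path n par z0 0).
  by rewrite inE (negbTE Hz0).
move: (leq_ltn_trans H1 (leq_ltn_trans H4' Hlt)); by rewrite ltnn.
Qed.

Lemma used_edges_sub n (par : 'I_n -> 'I_n) r s :
  used_edges par r s \subset [set e | (e.1 != r) && (e.2 == par e.1)].
Proof. apply: fold_edges; exact: sub0set. Qed.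

Theorem proposition2p4 (n : nat) (par : 'I_n -> 'I_n) (r : 'I_n)
    (s : 'I_n -> 'I_n) :
  is_rooted_tree par r -> parking_function par r s ->
  (forall u v : 'I_n, is_edge par r u v ->
     ((u, v) \in used_edges par r s <->
      #|subtree par u| < #|[set i : 'I_n | s i \in subtree par u]|)) /\
  (forall sigma : 'S_n,
     used_edges par r (fun i => s (sigma i)) = used_edges par r s).
Proof.
move=> Ht Hp; split.
  move=> u v /andP [Hu /eqP <-]; exact: used_iff.
move=> sigma.
have Hp' := parking_perm sigma Hp.
apply/setP => [[a b]].
apply/idP/idP => Hin.
  have := subsetP (used_edges_sub par r _) _ Hin; rewrite inE /= => /andP [Ha /eqP Hb].
  subst b; apply/(used_iff Ht Hp Ha); rewrite -(count_perm s sigma).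
  by apply/(used_iff Ht Hp' Ha).
have := subsetP (used_edges_sub par r _) _ Hin; rewrite inE /= => /andP [Ha /eqP Hb].
subst b; apply/(used_iff Ht Hp' Ha).
have -> : #|[set i | s (sigma i) \in subtree par a]| = #|[set i | s i \in subtree par a]|
  by apply: count_perm.
by apply/(used_iff Ht Hp Ha).
Qed.
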